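(* Let $A_t$, $t\in I$ ($I$ an interval containing $0$), solve the ODE $\dot A_t=A_t[A_t,A_t^*]$ in $\mathfrak{gl}_n(\mathbb C)$. Then $\operatorname{spec}A_t=\operatorname{spec}A_0$ for all $t\in I$.
   Context: $A^*$ is the conjugate transpose, $[X,Y]=XY-YX$, and $\operatorname{spec}$ denotes the set of eigenvalues (the proof in fact gives equality of characteristic polynomials). *)

(* Defs.v *)
From HB Require Import structures.
From mathcomp Require Import all_boot all_order all_algebra.
From mathcomp Require Import all_classical all_reals all_analysis.
From mathcomp Require Import complex.
Set Implicit Arguments. Unset Strict Implicit. Unset Printing Implicit Defensive.
Import Order.TTheory GRing.Theory Num.Theory.
Import numFieldNormedType.Exports.
Local Open Scope classical_set_scope.
Local Open Scope ring_scope.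

Definition adjC (R : rcfType) (m n : nat) (A : 'M[R[i]]_(m, n)) : 'M[R[i]]_(n, m) :=
  (map_mx (@conjc R) A)^T.

Definition commC (R : rcfType) (n : nat) (X Y : 'M[R[i]]_n) : 'M[R[i]]_n :=
  X *m Y - Y *m X.

(* f : R -> R has derivative d at t relative to the set I
   (one-sided at endpoints of an interval): the difference quotient
   tends to d as s -> t, s in I, s <> t. *)
Definition has_deriv_within (R : realType) (I : set R) (f : R -> R) (t d : R) : Prop :=
  (fun s => (s - t)^-1 * (f s - f t)) @ within I (t^') --> d.

Definition cderiv_within (R : realType) (I : set R) (f : R -> R[i]) (t : R) (d : R[i]) : Prop :=
  has_deriv_within I (fun s => complex.Re (f s)) t (complex.Re d) /\
  has_deriv_within I (fun s => complex.Im (f s)) t (complex.Im d).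

Definition solves_flow (R : realType) (n : nat) (I : set R) (A : R -> 'M[R[i]]_n) : Prop :=
  forall t, I t -> forall i j : 'I_n,
    cderiv_within I (fun s => A s i j)
      t ((A t *m commC (A t) (adjC (A t))) i j).

(* Main.v *)
Require Import Defs.
From HB Require Import structures.
From mathcomp Require Import all_boot all_order all_algebra.
From mathcomp Require Import all_classical all_reals all_analysis.
From mathcomp Require Import complex.
From mathcomp Require Import ring.
From mathcomp Require Import fingroup perm.
Import Order.TTheory GRing.Theory Num.Theory.
Import numFieldNormedType.Exports.
Set Implicit Arguments. Unset Strict Implicit. Unset Printing Implicit Defensive.
Local Open Scope classical_set_scope.
Local Open Scope ring_scope.

Section An.
Variable R : realType.
Implicit Types (I : set R) (f : R -> R).

Lemma hdw_cont I f x d : has_deriv_within I f x d -> f @ within I x^' --> f x.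
Proof.
move=> H.
have E : {near within I x^', (fun s => f x + (s - x) * ((s - x)^-1 * (f s - f x))) =1 f}.
  have E' : \forall s \near x, s != x -> I s -> f x + (s - x) * ((s - x)^-1 * (f s - f x)) = f s.
    near=> s => sx Is.
    rewrite mulrA mulfV ?mul1r; first by rewrite addrC subrK.
    by rewrite subr_eq0.
  exact: E'.
suff G : (fun s => f x + (s - x) * ((s - x)^-1 * (f s - f x))) @ within I x^' --> f x + 0 * d.
  by rewrite mul0r addr0 in G; apply: cvg_trans (near_eq_cvg E) G.
apply: cvgD; first exact: cvg_cst.
apply: (cvgM _ H).
apply: cvg_within_filter; apply: cvg_within_filter.
have Hs : (fun s => s - x) @ nbhs x --> x - x.
  by apply: cvgB; [exact: cvg_id | exact: cvg_cst].
by rewrite subrr in Hs.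
Unshelve. all: by end_near. Qed.


Lemma hdw_interior I f x d : (\forall s \near x, I s) ->
  has_deriv_within I f x d -> is_derive x 1 f d.
Proof.
move=> hI H.
have G : (fun h => h^-1 *: ((f \o shift x) (h *: 1) - f x)) @ 0^' --> d.
  move=> P /H HP.
  have K : \forall s \near x, s != x -> P ((s - x)^-1 * (f s - f x)).
    by move: hI HP; apply: filterS2 => s Is Hs sx; exact: Hs.
  rewrite (near_shift 0 x) in K.
  move: K; apply: filterS => z Hz z0 /=.
  have := Hz; rewrite /= subr0 => /(_ _).
  rewrite addrK -[z%:A]/(z * 1) mulr1 => K; apply: K.
  by rewrite -subr_eq0 addrK.
apply: DeriveDef; first by apply/cvg_ex; exists d; exact: G.
exact: cvg_lim G.
Qed.


Lemma deriv0_cst_lt I f : is_interval I ->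
  (forall t, I t -> has_deriv_within I f t 0) ->
  forall a b, I a -> I b -> a < b -> f a = f b.
Proof.
move=> iI D a b Ia Ib ab.
have sub z : a <= z <= b -> I z by move=> zab; exact: (iI a b).
have Dint x : x \in `]a, b[ -> is_derive x 1 f 0.
  move=> xab; apply: hdw_interior (D x _).
    move: (near_in_itvoo xab); apply: filterS => z zab; apply: sub.
    by rewrite !ltW ?(itvP zab).
  by apply: sub; rewrite !ltW ?(itvP xab).
have C : {within `[a, b], continuous f}.
  apply/continuous_within_itvP => //; split.
  - move=> x xab; have Dx := Dint x xab.
    exact/differentiable_continuous/derivable1_diffP/(@ex_derive _ _ _ _ _ _ _ Dx).
  - apply: (cvg_trans (cvg_fmap2 (f:=f) _) (hdw_cont (D a Ia))).
    move=> P HP; move: (lt_nbhsl ab) HP; apply: filterS2 => s sb Hs ays.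
    apply: Hs; first by rewrite gt_eqF.
    by apply: sub; rewrite !ltW.
  - apply: (cvg_trans (cvg_fmap2 (f:=f) _) (hdw_cont (D b Ib))).
    move=> P HP; move: (lt_nbhsr ab) HP; apply: filterS2 => s sb Hs ays.
    apply: Hs; first by rewrite lt_eqF.
    by apply: sub; rewrite !ltW.
have [c _ ] := MVT ab Dint C.
by rewrite mul0r => /eqP; rewrite subr_eq0 => /eqP.
Qed.

Lemma deriv0_cst I f : is_interval I ->
  (forall t, I t -> has_deriv_within I f t 0) ->
  forall a b, I a -> I b -> f a = f b.
Proof.
move=> iI D a b Ia Ib; case: (ltgtP a b) => [ab|ba|->//].
  exact: (deriv0_cst_lt iI D Ia Ib ab).
by apply/esym; exact: (deriv0_cst_lt iI D Ib Ia ba).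
Qed.


Lemma hdw_ext I f g t d : f = g -> has_deriv_within I f t d -> has_deriv_within I g t d.
Proof. by move=> ->. Qed.

Lemma hdw_val I f t d d' : d = d' -> has_deriv_within I f t d -> has_deriv_within I f t d'.
Proof. by move=> ->. Qed.

Lemma hdw_cst I t c : has_deriv_within I (fun _ => c) t 0.
Proof.
rewrite /has_deriv_within.
have -> : (fun s => (s - t)^-1 * (c - c)) = (fun _ => 0) by apply: funext => s; rewrite subrr mulr0.
exact: cvg_cst.
Qed.

Lemma hdw_add I f g t df dg : has_deriv_within I f t df -> has_deriv_within I g t dg ->
  has_deriv_within I (fun s => f s + g s) t (df + dg).
Proof.
move=> Hf Hg; rewrite /has_deriv_within.
have -> : (fun s => (s - t)^-1 * (f s + g s - (f t + g t))) =
   (fun s => (s - t)^-1 * (f s - f t) + (s - t)^-1 * (g s - g t)).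
  by apply: funext => s; ring.
exact: cvgD Hf Hg.
Qed.

Lemma hdw_opp I f t df : has_deriv_within I f t df ->
  has_deriv_within I (fun s => - f s) t (- df).
Proof.
move=> Hf; rewrite /has_deriv_within.
have -> : (fun s => (s - t)^-1 * (- f s - - f t)) =
   (fun s => - ((s - t)^-1 * (f s - f t))).
  by apply: funext => s; ring.
exact: cvgN Hf.
Qed.

Lemma hdw_mul I f g t df dg : has_deriv_within I f t df -> has_deriv_within I g t dg ->
  has_deriv_within I (fun s => f s * g s) t (f t * dg + df * g t).
Proof.
move=> Hf Hg; rewrite /has_deriv_within.
have -> : (fun s => (s - t)^-1 * (f s * g s - f t * g t)) =
   (fun s => f s * ((s - t)^-1 * (g s - g t)) + ((s - t)^-1 * (f s - f t)) * g t).
  by apply: funext => s; ring.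
apply: cvgD; first exact: cvgM (hdw_cont Hf) Hg.
exact: cvgM Hf (cvg_cst _).
Qed.

End An.

Section Cx.
Variable R : realType.
Local Notation C := R[i].
Implicit Types (I : set R) (F G : R -> C).

Lemma ReD (x y : C) : complex.Re (x + y) = complex.Re x + complex.Re y.
Proof. by case: x => a b; case: y => c d. Qed.
Lemma ImD (x y : C) : complex.Im (x + y) = complex.Im x + complex.Im y.
Proof. by case: x => a b; case: y => c d. Qed.
Lemma ReN (x : C) : complex.Re (- x) = - complex.Re x.
Proof. by case: x => a b. Qed.
Lemma ImN (x : C) : complex.Im (- x) = - complex.Im x.
Proof. by case: x => a b. Qed.
Lemma ReM (x y : C) : complex.Re (x * y) = complex.Re x * complex.Re y - complex.Im x * complex.Im y.
Proof. by case: x => a b; case: y => c d. Qed.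
Lemma ImM (x y : C) : complex.Im (x * y) = complex.Re x * complex.Im y + complex.Im x * complex.Re y.
Proof. by case: x => a b; case: y => c d. Qed.
Lemma Re0 : complex.Re (0 : C) = 0. Proof. by []. Qed.
Lemma Im0 : complex.Im (0 : C) = 0. Proof. by []. Qed.

Lemma cd_val I F t d d' : d = d' -> cderiv_within I F t d -> cderiv_within I F t d'.
Proof. by move=> ->. Qed.

Lemma cd_ext I F G t d : F = G -> cderiv_within I F t d -> cderiv_within I G t d.
Proof. by move=> ->. Qed.

Lemma cd_cst I t (c : C) : cderiv_within I (fun _ => c) t 0.
Proof. by split; apply: hdw_cst. Qed.

Lemma cd_add I F G t dF dG : cderiv_within I F t dF -> cderiv_within I G t dG ->
  cderiv_within I (fun s => F s + G s) t (dF + dG).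
Proof.
move=> [HF1 HF2] [HG1 HG2]; split.
  rewrite ReD; apply: hdw_ext (hdw_add HF1 HG1).
  by apply: funext => s; rewrite ReD.
rewrite ImD; apply: hdw_ext (hdw_add HF2 HG2).
by apply: funext => s; rewrite ImD.
Qed.

Lemma cd_opp I F t dF : cderiv_within I F t dF ->
  cderiv_within I (fun s => - F s) t (- dF).
Proof.
move=> [HF1 HF2]; split.
  rewrite ReN; apply: hdw_ext (hdw_opp HF1).
  by apply: funext => s; rewrite ReN.
rewrite ImN; apply: hdw_ext (hdw_opp HF2).
by apply: funext => s; rewrite ImN.
Qed.

Lemma cd_mul I F G t dF dG : cderiv_within I F t dF -> cderiv_within I G t dG ->
  cderiv_within I (fun s => F s * G s) t (F t * dG + dF * G t).
Proof.
move=> [HF1 HF2] [HG1 HG2]; split.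
  apply: hdw_val; last first.
    apply: hdw_ext; last first.
      by apply: hdw_add (hdw_mul HF1 HG1) (hdw_opp (hdw_mul HF2 HG2)).
    by apply: funext => s; rewrite ReM.
  by rewrite ReD !ReM; ring.
apply: hdw_val; last first.
  apply: hdw_ext; last first.
    by apply: hdw_add (hdw_mul HF1 HG2) (hdw_mul HF2 HG1).
  by apply: funext => s; rewrite ImM.
by rewrite /= ImD !ImM; ring.
Qed.


Lemma cd_sum I t (J : Type) (r : seq J) (P : pred J) (Fi : J -> R -> C) (dFi : J -> C) :
  (forall i, P i -> cderiv_within I (Fi i) t (dFi i)) ->
  cderiv_within I (fun s => \sum_(i <- r | P i) Fi i s) t (\sum_(i <- r | P i) dFi i).
Proof.
move=> H; elim: r => [|x r IH].
  rewrite big_nil; apply: cd_ext (cd_cst I t 0).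
  by apply: funext => s; rewrite big_nil.
rewrite big_cons; case Px: (P x).
  apply: cd_ext (cd_add (H x Px) IH).
  by apply: funext => s; rewrite big_cons Px.
by apply: cd_ext IH; apply: funext => s; rewrite big_cons Px.
Qed.

Lemma cd_prod I t (J : eqType) (r : seq J) (Fi : J -> R -> C) (dFi : J -> C) :
  uniq r -> (forall i, cderiv_within I (Fi i) t (dFi i)) ->
  cderiv_within I (fun s => \prod_(i <- r) Fi i s) t
    (\sum_(k <- r) \prod_(i <- r) (if i == k then dFi i else Fi i t)).
Proof.
move=> + H; elim: r => [|x r IH].
  move=> _; rewrite big_nil; apply: cd_ext (cd_cst I t 1).
  by apply: funext => s; rewrite big_nil.
move=> /= /andP[xr ur].
have K := cd_mul (H x) (IH ur).
apply: cd_ext; first by apply: funext => s; rewrite big_cons.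
apply: cd_val K.
rewrite big_cons big_cons eqxx addrC; congr (_ + _).
  congr (_ * _); rewrite big_seq_cond [RHS]big_seq_cond; apply: eq_bigr => i /andP[ir _].
  by case: eqP ir xr => // -> ->.
rewrite big_distrr big_seq_cond [RHS]big_seq_cond; apply: eq_bigr => k /andP[kr _].
rewrite big_cons; case: eqP kr xr => [-> -> //|_ _ _].
by [].
Qed.


Lemma cd_det I t n (M : R -> 'M[C]_n) (D : 'M[C]_n) :
  (forall i j, cderiv_within I (fun s => M s i j) t (D i j)) ->
  cderiv_within I (fun s => \det (M s)) t (\tr (\adj (M t) *m D)).
Proof.
move=> H.
have K : cderiv_within I (fun s => \sum_(σ : 'S_n) (-1) ^+ σ * \prod_i M s i (σ i)) t
   (\sum_(σ : 'S_n) ((-1) ^+ σ * \sum_(k <- index_enum 'I_n) \prod_(i <- index_enum 'I_n)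
        (if i == k then D i (σ i) else M t i (σ i)))).
  apply: cd_sum => σ _.
  apply: cd_val (cd_mul (cd_cst I t ((-1) ^+ σ))
     (cd_prod (index_enum_uniq _) (fun i => H i (σ i)))).
  by rewrite mul0r addr0.
have -> : (fun s => \det (M s)) = (fun s => \sum_(σ : {perm 'I_n}) (-1) ^+ σ * \prod_i M s i (σ i)) by [].
apply: cd_val K.
transitivity (\sum_k \det (\matrix_(i, j) if i == k then D i j else M t i j)).
  rewrite (eq_bigr (fun σ : 'S_n => \sum_(k <- index_enum 'I_n) ((-1) ^+ σ * \prod_(i <- index_enum 'I_n)
        (if i == k then D i (σ i) else M t i (σ i))))); last by move=> σ _; rewrite mulr_sumr.
  rewrite exchange_big /=; apply: eq_bigr => k _.
  rewrite /determinant; apply: eq_bigr => σ _; congr (_ * _).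
  by apply: eq_bigr => i _; rewrite mxE.
rewrite /mxtrace.
rewrite [RHS](eq_bigr (fun j => \sum_k D k j * cofactor (M t) k j)); last first.
  by move=> j _; rewrite mxE; apply: eq_bigr => k _; rewrite mxE mulrC.
rewrite [RHS]exchange_big /=; apply: eq_bigr => k _.
rewrite (expand_det_row _ k); apply: eq_bigr => j _; rewrite mxE eqxx; congr (_ * _).
rewrite /cofactor; congr (_ * \det _); apply/matrixP => i j'; rewrite !mxE.
by rewrite eq_sym (negbTE (neq_lift _ _)).
Qed.

End Cx.

Lemma eig_det (F : fieldType) n (A : 'M[F]_n) a :
  eigenvalue A a = (\det (a%:M - A) == 0).
Proof.
apply/eigenvalueP/det0P=> [[v Av_av v_nz] | [v v_nz Av_av]]; exists v => //.
  by rewrite mulmxBr Av_av mul_mx_scalar subrr.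
by apply/eqP; rewrite -mul_mx_scalar eq_sym -subr_eq0 -mulmxBr Av_av.
Qed.

Lemma trace_zero (R : rcfType) n (A : 'M[R[i]]_n) (z : R[i]) :
  \tr (\adj (z%:M - A) *m - (A *m commC A (adjC A))) = 0.
Proof.
set X := \adj (z%:M - A); set B := adjC A.
have XA : X *m A = A *m X.
  have h1 : X *m (z%:M - A) = (z%:M - A) *m X by rewrite mul_adj_mx mul_mx_adj.
  move: h1; rewrite mulmxBr mulmxBl mul_mx_scalar mul_scalar_mx.
  by move/addrI/oppr_inj.
rewrite mulmxN raddfN /= /commC !mulmxBr raddfB /= !mulmxA.
rewrite [in X in _ - X]mxtrace_mulC !mulmxA -XA.
by rewrite subrr oppr0.
Qed.

Lemma cplx_eq (R : rcfType) (x y : R[i]) :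
  complex.Re x = complex.Re y -> complex.Im x = complex.Im y -> x = y.
Proof. by case: x => a b; case: y => c d /= -> ->. Qed.

Unset Implicit Arguments.
Unset Strict Implicit.

Theorem lemma4p3 (R : realType) (n : nat) (I : set R) (A : R -> 'M[R[i]]_n) :
  is_interval I -> I 0 -> solves_flow I A ->
  forall t, I t -> forall z : R[i], eigenvalue (A t) z = eigenvalue (A 0) z.
Proof.
move=> iI I0 Hs t It z.
rewrite !eig_det.
suff -> : \det (z%:M - A t) = \det (z%:M - A 0) by [].
pose g := fun s => \det (z%:M - A s).
have Dg : forall s, I s -> cderiv_within I g s 0.
  move=> s Is.
  have K := (@cd_det _ I s n (fun u => z%:M - A u) (- (A s *m commC (A s) (adjC (A s))))).
  rewrite /g; apply: (cd_val (trace_zero _ _) (K _)).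
  move=> i j.
  apply: (@cd_ext _ _ (fun u => z%:M i j - A u i j)); first by apply: funext => u; rewrite !mxE.
  apply: (cd_val _ (cd_add (cd_cst I s (z%:M i j)) (cd_opp (Hs s Is i j)))).
  by rewrite add0r !mxE.
apply: cplx_eq.
  by apply: (deriv0_cst iI (fun s Is => (Dg s Is).1)).
by apply: (deriv0_cst iI (fun s Is => (Dg s Is).2)).
Qed.
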